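(* Let $x,p\in\mathbb{R}^d$ with $\lVert x\rVert=1$ and $\lVert p\rVert>1$, and let $y=\frac{p+x}{\lVert p+x\rVert}$. Then $$\Big\lVert\frac{p}{\lVert p\rVert}-y\Big\rVert\le\sqrt{2-2\sqrt{1-\frac{1}{\lVert p\rVert^2}}}.$$
   Context: $\lVert\cdot\rVert$ denotes the Euclidean norm on $\mathbb{R}^d$. *)

(* Defs.v *)
From mathcomp Require Import all_boot all_order all_algebra.
From mathcomp Require Import all_classical all_reals.
Set Implicit Arguments. Unset Strict Implicit. Unset Printing Implicit Defensive.
Import Order.TTheory GRing.Theory Num.Theory.
Local Open Scope ring_scope.

Definition enorm (R : realType) (d : nat) (v : 'rV[R]_d) : R :=
  Num.sqrt (\sum_(i < d) v 0 i ^+ 2).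

(* Main.v *)
Require Import Defs.
From mathcomp Require Import all_boot all_order all_algebra.
From mathcomp Require Import all_classical all_reals.
From mathcomp Require Import ring lra.
Import Order.TTheory GRing.Theory Num.Theory.
Local Open Scope ring_scope.

Section Aux.
Context {R : realType} {d : nat}.
Definition S (u v : 'rV[R]_d) : R := \sum_(i < d) u 0 i * v 0 i.

Lemma SC u v : S u v = S v u.
Proof. by apply: eq_bigr => i _; rewrite mulrC. Qed.
Lemma SDl u v w : S (u + v) w = S u w + S v w.
Proof. by rewrite /S -big_split; apply: eq_bigr => i _; rewrite !mxE mulrDl. Qed.
Lemma SBl u v w : S (u - v) w = S u w - S v w.
Proof. by rewrite /S -sumrB; apply: eq_bigr => i _; rewrite !mxE mulrBl. Qed.
Lemma SZl c u w : S (c *: u) w = c * S u w.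
Proof. by rewrite /S mulr_sumr; apply: eq_bigr => i _; rewrite !mxE mulrA. Qed.
Lemma SDr u v w : S w (u + v) = S w u + S w v.
Proof. by rewrite SC SDl !(SC w). Qed.
Lemma SBr u v w : S w (u - v) = S w u - S w v.
Proof. by rewrite SC SBl !(SC w). Qed.
Lemma SZr c u w : S w (c *: u) = c * S w u.
Proof. by rewrite SC SZl (SC w). Qed.
Lemma S_ge0 (u : 'rV[R]_d) : 0 <= S u u.
Proof. by apply: sumr_ge0 => i _; rewrite -expr2 sqr_ge0. Qed.
Lemma enormE (u : 'rV[R]_d) : enorm u = Num.sqrt (S u u).
Proof. by rewrite /enorm /S; congr Num.sqrt; apply: eq_bigr => i _; rewrite expr2. Qed.
Lemma enorm2 (u : 'rV[R]_d) : enorm u ^+ 2 = S u u.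
Proof. by rewrite enormE sqr_sqrtr // S_ge0. Qed.
Lemma enorm_ge0 (u : 'rV[R]_d) : 0 <= enorm u.
Proof. by rewrite enormE sqrtr_ge0. Qed.
End Aux.

Lemma key {R : realType} (r t N : R) : 1 < r -> -1 <= t <= 1 ->
  N ^+ 2 = r ^+ 2 + 2 * r * t + 1 -> 0 < N ->
  Num.sqrt (1 - (r ^+ 2)^-1) <= (r + t) / N.
Proof.
move=> r1 /andP[t1 t2] HN N0.
have rt : 0 <= (r + t) / N by apply: divr_ge0 => //; [lra | exact: ltW].
rewrite -(ger0_norm rt) -sqrtr_sqr; apply: ler_wsqrtr.
rewrite expr_div_n HN.
have D0 : 0 < r ^+ 2 + 2 * r * t + 1 by rewrite -HN exprn_gt0.
have r0 : r != 0 by apply/negP => /eqP; lra.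
rewrite -subr_ge0.
have -> : (r + t) ^+ 2 / (r ^+ 2 + 2 * r * t + 1) - (1 - (r ^+ 2)^-1)
   = (r * t + 1) ^+ 2 / (r ^+ 2 * (r ^+ 2 + 2 * r * t + 1)).
  by field; rewrite ?D0 ?r0 ?lt0r_neq0 // ?mulf_neq0 ?expf_neq0 ?lt0r_neq0.
by apply: divr_ge0; [exact: sqr_ge0 | apply: mulr_ge0; [exact: sqr_ge0|exact: ltW]].
Qed.

Theorem lemma3 (R : realType) (d : nat) (x p : 'rV[R]_d) :
  enorm x = 1 -> 1 < enorm p ->
  let y := (enorm (p + x))^-1 *: (p + x) in
  enorm ((enorm p)^-1 *: p - y) <=
    Num.sqrt (2 - 2 * Num.sqrt (1 - (enorm p ^+ 2)^-1)).
Proof.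
move=> hx hp.
change (enorm ((enorm p)^-1 *: p - (enorm (p + x))^-1 *: (p + x)) <=
    Num.sqrt (2 - 2 * Num.sqrt (1 - (enorm p ^+ 2)^-1))).
set y := (enorm (p + x))^-1 *: (p + x).
set r := enorm p in hp *.
set N := enorm (p + x).
set a := r^-1 *: p.
have r0 : r != 0 by apply/negP => /eqP; lra.
have Spp : S p p = r ^+ 2 by rewrite -enorm2.
have Sxx : S x x = 1 by rewrite -enorm2 hx expr1n.
have Saa : S a a = 1 by rewrite /a SZl SZr Spp; field.
have Sap : S a p = r by rewrite /a SZl Spp; field.
set t := S a x.
have Spx : S p x = r * t by rewrite /t /a SZl mulrA divff // mul1r.
have t1 : t <= 1.
  have := S_ge0 (a - x); rewrite !SBl !SBr Saa Sxx (SC x a) -/t; lra.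
have t2 : -1 <= t.
  have := S_ge0 (a + x); rewrite !SDl !SDr Saa Sxx (SC x a) -/t; lra.
have HN : N ^+ 2 = r ^+ 2 + 2 * r * t + 1.
  by rewrite /N enorm2 !SDl !SDr Spp Sxx (SC x p) Spx; ring.
have N0 : 0 < N.
  rewrite lt0r enorm_ge0 andbT; apply/negP => /eqP N0.
  move: HN; rewrite N0 expr0n /=; nra.
have Say : S a y = (r + t) / N.
  by rewrite /y SZr SDr Sap -/t mulrC.
have Syy : S y y = 1.
  rewrite /y SZl SZr -/N -enorm2 -/N; field; exact: lt0r_neq0.
rewrite enormE -/a SBl !SBr Saa Syy (SC y a) Say.
apply: ler_wsqrtr.
have := @key R r t N hp (introT andP (conj t2 t1)) HN N0.
lra.
Qed.
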